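(* Let $\Gamma$ be a graph satisfying Assumption (A), and fix an index $j$ of an entry of the trace vector that is not one of the forced-zero entries (i.e. not $B_i$ with $o(e_i)$ of degree one, nor $D_i$ with $\tau(e_i)$ of degree one). Then there exist $\boldsymbol{\ell}\in\mathbb{R}_+^N$ and an eigenpair $(k^2,f)$ of $(\Gamma,\boldsymbol{\ell})$ such that $k^2$ is a non-zero simple eigenvalue, $f$ is not supported on a single loop (if $\Gamma$ has loops), and $(\mathrm{tr}_k(f))_j\neq0$.
   Context: $\Gamma$: finite graph with edges $e_1,\dots,e_N$ oriented from $o(e_j)$ to $\tau(e_j)$; a loop has $o(e_j)=\tau(e_j)$. Assumption (A): connected, no vertex of degree two, some vertex of degree different from two. $(\Gamma,\boldsymbol{\ell})$: $e_j\cong[0,\ell_j]$ ($t=0$ at $o(e_j)$), Laplacian $-d^2/dt^2$ with standard vertex conditions (continuity at vertices and $\sum_{o(e_i)=v}f'|_{e_i}(0)-\sum_{\tau(e_i)=v}f'|_{e_i}(\ell_i)=0$). For an eigenpair with $k>0$: $f|_{e_i}(t)=A_i\cos(kt)+B_i\sin(kt)=C_i\cos(k(\ell_i-t))+D_i\sin(k(\ell_i-t))$; $\mathrm{tr}_k(f)\in\mathbb{C}^{4N}$ collects all $A_i,B_i,C_i,D_i$ ($B_i=f'|_{e_i}(0)/k$, $D_i=-f'|_{e_i}(\ell_i)/k$, which vanish at degree-one vertices). $f$ is supported on a single loop if for some loop $e_i$, $f$ vanishes identically on all other edges. *)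

(* Defs.v *)
From Stdlib Require Import Reals.
From Coquelicot Require Import Coquelicot.
From mathcomp Require Import ssreflect ssrfun ssrbool eqtype ssrnat seq
  choice fintype finset bigop fingraph.

Set Implicit Arguments.
Unset Strict Implicit.
Unset Printing Implicit Defensive.

(** A finite graph: vertex set [V] (a finite type), edges [e_0..e_{N-1}]
    indexed by ['I_N], edge [i] oriented from [o i] to [tau i]. *)

(** degree of a vertex: number of edge-ends at [v] (a loop counts twice). *)
Definition degree (V : finType) (N : nat) (o tau : 'I_N -> V) (v : V) : nat :=
  (#|[set i : 'I_N | o i == v]| + #|[set i : 'I_N | tau i == v]|)%N.

Definition adjacent (V : finType) (N : nat) (o tau : 'I_N -> V) : rel V :=
  fun u w => [exists i : 'I_N, ((o i == u) && (tau i == w))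
                             || ((o i == w) && (tau i == u))].

Definition graph_connected (V : finType) (N : nat) (o tau : 'I_N -> V) : Prop :=
  forall u w : V, connect (adjacent o tau) u w.

Definition assumptionA (V : finType) (N : nat) (o tau : 'I_N -> V) : Prop :=
  [/\ graph_connected o tau,
      (forall v : V, degree o tau v <> 2%N)
    & (exists v : V, degree o tau v <> 2%N)].

Open Scope R_scope.

Definition is_deriveC (g : R -> C) (t : R) (l : C) : Prop :=
  @is_derive R_AbsRing C_R_NormedModule g t l.

(** [f i t] is the value of the function on edge [e_i] at the point
    [t in [0, l i]] ([t = 0] at [o e_i]); [df i] is its derivative.
    [solution] says: [f] solves [-f'' = lam f] on every edge (twice
    differentiable on the closed edge) and satisfies the standard vertex
    conditions (continuity and Kirchhoff).  Zero is allowed (the eigenspace). *)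
Definition solution (V : finType) (N : nat) (o tau : 'I_N -> V) (l : 'I_N -> R)
  (lam : R) (f df : 'I_N -> R -> C) : Prop :=
  [/\ (forall i t, 0 <= t <= l i -> is_deriveC (f i) t (df i t)),
      (forall i t, 0 <= t <= l i ->
          is_deriveC (df i) t (Cmult (RtoC (- lam)) (f i t))),
      [/\ (forall i j, o i = o j -> f i 0 = f j 0),
          (forall i j, o i = tau j -> f i 0 = f j (l j))
        & (forall i j, tau i = tau j -> f i (l i) = f j (l j))]
    &
      (forall v : V,
          Cminus (\big[Cplus/RtoC 0]_(i | o i == v) df i 0)
                 (\big[Cplus/RtoC 0]_(i | tau i == v) df i (l i)) = RtoC 0)].

Definition nonzero_fun (N : nat) (l : 'I_N -> R) (f : 'I_N -> R -> C) : Prop :=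
  exists i t, 0 <= t <= l i /\ f i t <> RtoC 0.

Definition eigenpair (V : finType) (N : nat) (o tau : 'I_N -> V) (l : 'I_N -> R)
  (lam : R) (f df : 'I_N -> R -> C) : Prop :=
  solution o tau l lam f df /\ nonzero_fun l f.

Definition simple_eigenvalue (V : finType) (N : nat) (o tau : 'I_N -> V)
  (l : 'I_N -> R) (lam : R) : Prop :=
  exists f0 df0, eigenpair o tau l lam f0 df0 /\
    forall g dg, solution o tau l lam g dg ->
      exists c : C, forall i t, 0 <= t <= l i -> g i t = Cmult c (f0 i t).

Definition supported_on_single_loop (V : finType) (N : nat) (o tau : 'I_N -> V)
  (l : 'I_N -> R) (f : 'I_N -> R -> C) : Prop :=
  exists i, o i = tau i /\
    forall j, j <> i -> forall t, 0 <= t <= l j -> f j t = RtoC 0.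

Inductive trcomp := trA | trB | trC | trD.

Definition trace_k (N : nat) (l : 'I_N -> R) (k : R) (f df : 'I_N -> R -> C)
  (j : 'I_N * trcomp) : C :=
  let (i, c) := j in
  match c with
  | trA => f i 0
  | trB => Cdiv (df i 0) (RtoC k)
  | trC => f i (l i)
  | trD => Copp (Cdiv (df i (l i)) (RtoC k))
  end.

Definition forced_zero (V : finType) (N : nat) (o tau : 'I_N -> V)
  (j : 'I_N * trcomp) : Prop :=
  let (i, c) := j in
  match c with
  | trB => degree o tau (o i) = 1%N
  | trD => degree o tau (tau i) = 1%N
  | _ => False
  end.

(* Main.v *)
Require Import Defs.
From Stdlib Require Import Reals.
From Coquelicot Require Import Coquelicot.
From mathcomp Require Import ssreflect ssrfun ssrbool eqtype ssrnat fintype.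
Open Scope R_scope.

From Stdlib Require Import Lra Lia.
From HB Require Import structures.
From mathcomp Require Import seq path choice finset bigop fingraph.
From mathcomp Require Import zify.
Open Scope R_scope.
Module T1.
Set Implicit Arguments.
Unset Strict Implicit.

HB.instance Definition _ := Monoid.isComLaw.Build R 0 Rplus (fun a b c => esym (Rplus_assoc a b c)) Rplus_comm Rplus_0_l.
HB.instance Definition _ := Monoid.isComLaw.Build C (RtoC 0) Cplus Cplus_assoc Cplus_comm Cplus_0_l.

Lemma test (n : nat) (F : 'I_n -> R) : \big[Rplus/0]_(i < n) (F i + 0) = \big[Rplus/0]_(i < n) F i + \big[Rplus/0]_(i < n) 0.
Proof. by rewrite big_split. Qed.

Lemma derC_fst (g : R -> C) t l : is_deriveC g t l -> is_derive (fun t => fst (g t)) t (fst l).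
Proof.
move=> H.
have := filterdiff_comp _ (fun x : C_R_NormedModule => fst x) _ _ H (filterdiff_linear _ is_linear_fst).
move=> H2. unfold is_derive. eapply filterdiff_ext_lin. apply: H2; apply: locally_filter. move=> y /=. reflexivity.
Qed.
Lemma derC_snd (g : R -> C) t l : is_deriveC g t l -> is_derive (fun t => snd (g t)) t (snd l).
Proof.
move=> H.
have := filterdiff_comp _ (fun x : C_R_NormedModule => snd x) _ _ H (filterdiff_linear _ is_linear_snd).
move=> H2. unfold is_derive. eapply filterdiff_ext_lin. apply: H2; apply: locally_filter. move=> y /=. reflexivity.
Qed.

Lemma derC_pair (u v : R -> R) t du dv :
  is_derive u t du -> is_derive v t dv -> is_deriveC (fun t => (u t, v t) : C) t ((du, dv) : C).
Proof.
move=> Hu Hv. unfold is_deriveC, is_derive.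
have H := @filterdiff_comp'_2 R_AbsRing R_NormedModule R_NormedModule R_NormedModule C_R_NormedModule
  u v (fun a b => (a, b) : C) t _ _ (fun a b => (a, b) : C) Hu Hv.
eapply filterdiff_ext_lin. apply: H.
- apply: (filterdiff_linear (fun t0 : prod_NormedModule R_AbsRing R_NormedModule R_NormedModule => (fst t0, snd t0) : C)).
  split.
  + by move=> [a b] [c d].
  + by move=> k [a b].
  + exists 1. split; first lra. move=> [a b]. rewrite Rmult_1_l. apply Rle_refl.
- move=> y. reflexivity.
Qed.

Lemma derC_RtoC (u : R -> R) t du :
  is_derive u t du -> is_deriveC (fun t => RtoC (u t)) t (RtoC du).
Proof.
move=> Hu. apply: (@derC_pair u (fun _ => 0)) => //. apply: is_derive_const.
Qed.

Lemma const_on (P : R -> R) L : (forall t, 0 <= t <= L -> derivable_pt_lim P t 0) ->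
  forall t, 0 <= t <= L -> P t = P 0.
Proof.
intros H t Ht.
destruct (MVT_gen P 0 t (fun _ => 0)) as [c [_ Hc]].
- intros x Hx. rewrite Rmin_left in Hx; [|lra]. rewrite Rmax_right in Hx; [|lra].
  apply is_derive_Reals, H; lra.
- intros x Hx. rewrite Rmin_left in Hx; [|lra]. rewrite Rmax_right in Hx; [|lra].
  apply derivable_continuous_pt. exists 0. apply H; lra.
- lra.
Qed.

Lemma ode_real (u u1 : R -> R) (L : R) :
 (forall t, 0 <= t <= L -> derivable_pt_lim u t (u1 t)) ->
 (forall t, 0 <= t <= L -> derivable_pt_lim u1 t (- u t)) ->
 forall t, 0 <= t <= L -> u t = u 0 * cos t + u1 0 * sin t /\ u1 t = - u 0 * sin t + u1 0 * cos t.
Proof.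
intros Hu Hu1 t Ht.
set P := fun t => u t * cos t - u1 t * sin t.
set Q := fun t => u t * sin t + u1 t * cos t.
have HP : forall t, 0 <= t <= L -> P t = P 0.
{ apply const_on. intros x Hx.
  have E : 0 = (u1 x * cos x + u x * (- sin x)) - ((- u x) * sin x + u1 x * cos x) by ring.
  rewrite E. apply derivable_pt_lim_minus; apply derivable_pt_lim_mult; auto;
  [apply derivable_pt_lim_cos | apply derivable_pt_lim_sin]. }
have HQ : forall t, 0 <= t <= L -> Q t = Q 0.
{ apply const_on. intros x Hx.
  have E : 0 = (u1 x * sin x + u x * cos x) + ((- u x) * cos x + u1 x * (- sin x)) by ring.
  rewrite E. apply derivable_pt_lim_plus; apply derivable_pt_lim_mult; auto;
  [apply derivable_pt_lim_sin | apply derivable_pt_lim_cos]. }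
have h1 := HP t Ht. have h2 := HQ t Ht.
rewrite /P /Q cos_0 sin_0 in h1 h2.
have hc := sin2_cos2 t. unfold Rsqr in hc.
split.
- have -> : u t = cos t * (u t * cos t - u1 t * sin t) + sin t * (u t * sin t + u1 t * cos t).
  { transitivity (u t * (sin t * sin t + cos t * cos t)); [rewrite hc; ring | ring]. }
  rewrite h1 h2. ring.
- have -> : u1 t = - sin t * (u t * cos t - u1 t * sin t) + cos t * (u t * sin t + u1 t * cos t).
  { transitivity (u1 t * (sin t * sin t + cos t * cos t)); [rewrite hc; ring | ring]. }
  rewrite h1 h2. ring.
Qed.

Lemma is_derive_eq (f : R -> R) t l l' : is_derive f t l -> l = l' -> is_derive f t l'.
Proof. by move=> H <-. Qed.

Lemma ode_C (g dg : R -> C) (L lam : R) : lam = 1 ->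
 (forall t, 0 <= t <= L -> is_deriveC g t (dg t)) ->
 (forall t, 0 <= t <= L -> is_deriveC dg t (Cmult (RtoC (- lam)) (g t))) ->
 forall t, 0 <= t <= L ->
   g t = Cplus (Cmult (g 0) (RtoC (cos t))) (Cmult (dg 0) (RtoC (sin t))) /\
   dg t = Cplus (Cmult (g 0) (RtoC (- sin t))) (Cmult (dg 0) (RtoC (cos t))).
Proof.
move=> -> Hg Hdg t Ht.
have A1 : forall x, 0 <= x <= L -> derivable_pt_lim (fun t => fst (g t)) x (fst (dg x)).
{ move=> x Hx. apply is_derive_Reals. exact: derC_fst (Hg x Hx). }
have A2 : forall x, 0 <= x <= L -> derivable_pt_lim (fun t => fst (dg t)) x (- fst (g x)).
{ move=> x Hx. apply is_derive_Reals. apply: is_derive_eq. exact: derC_fst (Hdg x Hx). simpl; ring. }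
have A3 : forall x, 0 <= x <= L -> derivable_pt_lim (fun t => snd (g t)) x (snd (dg x)).
{ move=> x Hx. apply is_derive_Reals. exact: derC_snd (Hg x Hx). }
have A4 : forall x, 0 <= x <= L -> derivable_pt_lim (fun t => snd (dg t)) x (- snd (g x)).
{ move=> x Hx. apply is_derive_Reals. apply: is_derive_eq. exact: derC_snd (Hdg x Hx). simpl; ring. }
have [h1 h2] := ode_real A1 A2 Ht.
have [h3 h4] := ode_real A3 A4 Ht.
simpl in h1, h2, h3, h4.
split; apply injective_projections; simpl; [rewrite h1|rewrite h3|rewrite h2|rewrite h4]; ring.
Qed.

Lemma Cdiv1 (z : C) : Cdiv z (RtoC 1) = z.
Proof. apply injective_projections; simpl; field. Qed.

Lemma RtoC_neq (a : R) : a <> 0 -> RtoC a <> RtoC 0.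
Proof. move=> H E. apply H. by case: E. Qed.

Lemma Cmult_RtoC_cancel (z : C) (a : R) : a <> 0 -> Cmult z (RtoC a) = RtoC 0 -> z = RtoC 0.
Proof.
move=> Ha. case: z => x y /= E. case: E => E1 E2.
have hx : x = 0. { have : x * a = 0 by lra. case/Rmult_integral => //. }
have hy : y = 0. { have : y * a = 0 by lra. case/Rmult_integral => //. }
by rewrite hx hy.
Qed.

Definition Fv (s t : R) := cos t + s * sin t.
Definition Fd (s t : R) := - sin t + s * cos t.

Lemma atan_facts (s : R) : 0 < cos (atan s) /\ sin (atan s) = s * cos (atan s)
  /\ sin (atan s) * sin (atan s) + cos (atan s) * cos (atan s) = 1.
Proof.
have [h1 h2] := atan_bound s.
have Hc : 0 < cos (atan s) by apply cos_gt_0; lra.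
split; first done. split.
- have := tan_atan s. rewrite /tan => E. rewrite -{2}E. field. lra.
- have := sin2_cos2 (atan s). by rewrite /Rsqr.
Qed.

Definition len_nt (s : R) := 2 * atan s + 2 * PI.
Definition len_lf (s : R) := atan s + PI.

Lemma nt_cos s : cos (len_nt s) = cos (2 * atan s).
Proof. by rewrite /len_nt cos_plus cos_2PI sin_2PI; ring. Qed.
Lemma nt_sin s : sin (len_nt s) = sin (2 * atan s).
Proof. by rewrite /len_nt sin_plus cos_2PI sin_2PI; ring. Qed.

Lemma nt_Fv s : Fv s (len_nt s) = 1.
Proof.
have [Hc [Hs H1]] := atan_facts s.
rewrite /Fv nt_cos nt_sin cos_2a sin_2a.
set c := cos (atan s) in Hc Hs H1 *. set sn := sin (atan s) in Hs H1 *.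
rewrite -H1 Hs. ring.
Qed.

Lemma nt_Fd s : Fd s (len_nt s) = - s.
Proof.
have [Hc [Hs H1]] := atan_facts s.
rewrite /Fd nt_cos nt_sin cos_2a sin_2a.
set c := cos (atan s) in Hc Hs H1 *. set sn := sin (atan s) in Hs H1 *.
transitivity (- s * (sn * sn + c * c)); last by rewrite H1; ring.
rewrite Hs. ring.
Qed.

Lemma nt_sin_nz s : s <> 0 -> sin (len_nt s) <> 0.
Proof.
move=> Hs0. have [Hc [Hs H1]] := atan_facts s.
rewrite nt_sin sin_2a Hs. move=> E.
have : s * (cos (atan s) * cos (atan s)) = 0 by lra.
case/Rmult_integral => // /Rmult_integral. lra.
Qed.

Lemma nt_pos s : 0 < len_nt s.
Proof. rewrite /len_nt. have [h1 h2] := atan_bound s. have := PI_RGT_0. lra. Qed.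

Lemma lf_cos s : cos (len_lf s) = - cos (atan s). Proof. by rewrite /len_lf neg_cos. Qed.
Lemma lf_sin s : sin (len_lf s) = - sin (atan s). Proof. by rewrite /len_lf neg_sin. Qed.

Lemma lf_Fd s : Fd s (len_lf s) = 0.
Proof. have [Hc [Hs H1]] := atan_facts s. rewrite /Fd lf_cos lf_sin Hs. ring. Qed.

Lemma lf_cos_nz s : cos (len_lf s) <> 0.
Proof. have [Hc _] := atan_facts s. rewrite lf_cos. lra. Qed.

Lemma lf_Fv_nz s : Fv s (len_lf s) <> 0.
Proof.
have [Hc [Hs H1]] := atan_facts s. rewrite /Fv lf_cos lf_sin Hs.
have : 0 < cos (atan s) * (1 + s * s). { apply Rmult_lt_0_compat => //. nra. }
lra.
Qed.

Lemma lf_pos s : 0 < len_lf s.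
Proof. rewrite /len_lf. have [h1 h2] := atan_bound s. have := PI_RGT_0. lra. Qed.

Lemma tp_Fv s : Fv s (2 * PI) = 1. Proof. rewrite /Fv cos_2PI sin_2PI. ring. Qed.
Lemma tp_Fd s : Fd s (2 * PI) = s. Proof. rewrite /Fd cos_2PI sin_2PI. ring. Qed.
Lemma Fv0 s : Fv s 0 = 1. Proof. rewrite /Fv cos_0 sin_0. ring. Qed.
Lemma Fd0 s : Fd s 0 = s. Proof. rewrite /Fd cos_0 sin_0. ring. Qed.

Lemma Fv_der s L t : is_derive (fun t => Fv s (L - t)) t (- Fd s (L - t)).
Proof. rewrite /Fv /Fd. auto_derive => //. rewrite /Rminus. ring. Qed.
Lemma Fd_der s L t : is_derive (fun t => - Fd s (L - t)) t (- Fv s (L - t)).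
Proof. rewrite /Fv /Fd. auto_derive => //. rewrite /Rminus. ring. Qed.
Lemma Fv_der' s t : is_derive (fun t => Fv s t) t (Fd s t).
Proof. rewrite /Fv /Fd. auto_derive => //. rewrite /Rminus. ring. Qed.
Lemma Fd_der' s t : is_derive (fun t => Fd s t) t (- Fv s t).
Proof. rewrite /Fv /Fd. auto_derive => //. rewrite /Rminus. ring. Qed.

End T1.
Import T1.

Module T2.
Set Implicit Arguments.
Unset Strict Implicit.

Section Deg.
Variables (V : finType) (N : nat) (o tau : 'I_N -> V).
Local Notation deg := (degree o tau).
Definition touch i x := (o i == x) || (tau i == x).
Definition ends i x := ((o i == x) + (tau i == x))%N.

Lemma deg_sum x : deg x = (\sum_(i < N) ends i x)%N.
Proof.
rewrite /degree /ends big_split /= -!sum1_card.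
rewrite [in LHS]big_mkcond [X in (_ + X)%N]big_mkcond /=.
congr (_ + _)%N; apply: eq_bigr => i _; rewrite inE; by case: (_ == _).
Qed.

Lemma ends_touch i x : (0 < ends i x)%N = touch i x.
Proof. rewrite /ends /touch. by case: (o i == x); case: (tau i == x). Qed.

Lemma deg_ge1 i x : touch i x -> (0 < deg x)%N.
Proof.
move=> H. rewrite deg_sum (bigD1 i) //= -ends_touch in H *.
by rewrite (leq_trans H) // leq_addr.
Qed.

Lemma deg_ge2 i i' x : i != i' -> touch i x -> touch i' x -> (1 < deg x)%N.
Proof.
move=> Hii H H'. rewrite deg_sum (bigD1 i) //= (bigD1 i') //=; last by rewrite eq_sym.
rewrite -ends_touch in H. rewrite -ends_touch in H'.
rewrite addnA. apply: leq_trans (leq_addr _ _). by rewrite -[2%N]/(1+1)%N leq_add.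
Qed.

Lemma deg_loop i x : o i == x -> tau i == x -> (1 < deg x)%N.
Proof.
move=> H1 H2. rewrite deg_sum (bigD1 i) //=. apply: leq_trans (leq_addr _ _).
by rewrite /ends H1 H2.
Qed.

Lemma deg_only2 x (b1 b2 : bool) i1 i2 :
  (forall i, touch i x -> (b1 && (i == i1)) || (b2 && (i == i2))) ->
  (deg x <= b1 * ends i1 x + b2 * ends i2 x)%N.
Proof.
move=> H. rewrite deg_sum.
apply: (@leq_trans (\sum_(i < N) (b1 * ((i == i1) * ends i x) + b2 * ((i == i2) * ends i x)))%N).
- apply: leq_sum => i _. case Ht: (touch i x); last first.
  + by move: Ht; rewrite -ends_touch; case: (ends i x).
  + move: (H i Ht); clear H. case: b1; case: b2; case: (i == i1); case: (i == i2) => //=; rewrite ?add0n ?addn0 ?mul1n //.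
    by rewrite leq_addr.
- rewrite big_split /= -!big_distrr /=. apply: leq_add; apply: leq_mul => //.
  + rewrite (bigD1 i1) //= eqxx mul1n big1 ?addn0 // => i /negbTE ->. by rewrite mul0n.
  + rewrite (bigD1 i2) //= eqxx mul1n big1 ?addn0 // => i /negbTE ->. by rewrite mul0n.
Qed.

Lemma handshake : (\sum_(x : V) deg x = N + N)%N.
Proof.
under eq_bigr do rewrite deg_sum. rewrite exchange_big /=.
rewrite -[in RHS](card_ord N) -sum1_card -big_split /=.
apply: eq_bigr => i _. rewrite /ends big_split /=.
have E : forall y : V, (\sum_(x : V) (y == x) = 1)%N.
{ move=> y. rewrite (bigD1 y) //= eqxx big1 // => x. by rewrite eq_sym => /negbTE ->. }
by rewrite !E.
Qed.

Definition aE (E : pred 'I_N) : rel V := fun u w =>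
  [exists i, E i && (((o i == u) && (tau i == w)) || ((o i == w) && (tau i == u)))].

Lemma aE_sym E : symmetric (aE E).
Proof.
move=> u w. rewrite /aE. apply/existsP/existsP => [[i Hi]|[i Hi]]; exists i; by rewrite orbC.
Qed.
End Deg.

End T2.
Import T2.

Module T34.
Set Implicit Arguments.
Unset Strict Implicit.

Lemma big_Rminus (I : finType) (P : pred I) (F G : I -> R) :
  \big[Rplus/0]_(i | P i) (F i - G i) = \big[Rplus/0]_(i | P i) F i - \big[Rplus/0]_(i | P i) G i.
Proof.
rewrite /Rminus big_split /=. congr (_ + _).
symmetry. apply: (big_endo Ropp). move=> x y; ring. ring.
Qed.

Lemma big_Rscal (I : finType) (P : pred I) (F : I -> R) a :
  \big[Rplus/0]_(i | P i) (a * F i) = a * \big[Rplus/0]_(i | P i) F i.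
Proof. symmetry. apply: (big_endo (Rmult a)). move=> x y; ring. ring. Qed.

Lemma big_R_ge0 (I : finType) (P : pred I) (F : I -> R) :
  (forall i, P i -> 0 <= F i) -> 0 <= \big[Rplus/0]_(i | P i) F i.
Proof. move=> H. apply: (big_ind (fun x => 0 <= x)) => //; [lra| move=> x y; lra]. Qed.


Lemma cancel_lin (x y : C) a : a <> 0 -> Cmult (Cminus x y) (RtoC a) = RtoC 0 -> x = y.
Proof.
move=> Ha H. have := Cmult_RtoC_cancel Ha H => E.
transitivity (Cplus (Cminus x y) y); first ring. rewrite E. ring.
Qed.

Lemma sumR_const (I : finType) (P : pred I) : \big[Rplus/0]_(i | P i) 1 = INR #|P|.
Proof.
rewrite big_const. elim: #|P| => [|n IH] //=. rewrite IH. case: n {IH} => [|n] /=; ring.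
Qed.

Lemma big_Cminus (I : finType) (P : pred I) (F G : I -> C) :
  \big[Cplus/RtoC 0]_(i | P i) Cminus (F i) (G i) =
  Cminus (\big[Cplus/RtoC 0]_(i | P i) F i) (\big[Cplus/RtoC 0]_(i | P i) G i).
Proof.
have -> : \big[Cplus/RtoC 0]_(i | P i) Cminus (F i) (G i) = \big[Cplus/RtoC 0]_(i | P i) Cplus (F i) (Copp (G i)).
{ apply: eq_bigr => i _. ring. }
rewrite big_split /=. have -> : \big[Cplus/RtoC 0]_(i | P i) Copp (G i) = Copp (\big[Cplus/RtoC 0]_(i | P i) G i).
{ symmetry. apply: (big_endo Copp). move=> x y; ring. ring. }
ring.
Qed.

Lemma big_Cscal (I : finType) (P : pred I) (F : I -> C) a :
  \big[Cplus/RtoC 0]_(i | P i) Cmult a (F i) = Cmult a (\big[Cplus/RtoC 0]_(i | P i) F i).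
Proof. symmetry. apply: (big_endo (Cmult a)). move=> x y; ring. ring. Qed.

Lemma big_RtoC (I : finType) (P : pred I) (F : I -> R) :
  RtoC (\big[Rplus/0]_(i | P i) F i) = \big[Cplus/RtoC 0]_(i | P i) RtoC (F i).
Proof. exact: (big_morph RtoC RtoC_plus erefl). Qed.

Section Tree.
Variables (V : finType) (N : nat) (o tau : 'I_N -> V).
Local Notation deg := (degree o tau).
Local Notation touch := (touch o tau).
Local Notation ends := (ends o tau).
Variables (r : V) (p : V -> V) (par : V -> 'I_N) (dep : V -> nat).
Hypothesis Hdr : dep r = 0%N.
Hypothesis Hdp : forall v, v != r -> (dep (p v)).+1 = dep v.
Hypothesis Hpar : forall v, v != r ->
  ((o (par v) == p v) && (tau (par v) == v)) || ((o (par v) == v) && (tau (par v) == p v)).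

Lemma dep0 v : dep v = 0%N -> v = r.
Proof. move=> H. apply/eqP; apply/negPn/negP => /Hdp. by rewrite H. Qed.

Lemma p_neq v : v != r -> p v != v.
Proof. move=> /Hdp H. apply/eqP => E. move: H. rewrite E => /eqP. by rewrite (gtn_eqF (ltnSn _)). Qed.

Lemma p_neq' v : v != r -> (v == p v) = false.
Proof. move=> Hv. apply/negbTE. rewrite eq_sym. exact: p_neq. Qed.

Lemma touch_par v x : v != r -> touch (par v) x = (x == v) || (x == p v).
Proof.
move=> Hv. rewrite /T2.touch. case/orP: (Hpar Hv) => /andP[/eqP -> /eqP ->];
  rewrite ![_ == x]eq_sym //. by rewrite orbC.
Qed.

Lemma ends_par v x : v != r -> ends (par v) x = ((x == v) + (x == p v))%N.
Proof.
move=> Hv. rewrite /T2.ends. case/orP: (Hpar Hv) => /andP[/eqP -> /eqP ->];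
  rewrite ![_ == x]eq_sym //. by rewrite addnC.
Qed.

Lemma par_inj u v : u != r -> v != r -> par u = par v -> u = v.
Proof.
move=> Hu Hv E.
have H1 : touch (par v) u by rewrite -E touch_par // eqxx.
have H2 : touch (par u) v by rewrite E touch_par // eqxx.
rewrite touch_par // in H1. rewrite touch_par // in H2.
case/orP: H1 => [/eqP //|/eqP Hu'].
case/orP: H2 => [/eqP //|/eqP Hv'].
have := Hdp Hu. have := Hdp Hv. rewrite -Hu' -Hv'. lia.
Qed.

Definition tree i := [exists v, (v != r) && (par v == i)].
Definition ch i := odflt r [pick v | (v != r) && (par v == i)].

Lemma tree_par v : v != r -> tree (par v).
Proof. move=> Hv. apply/existsP; exists v. by rewrite Hv eqxx. Qed.

Lemma ch_par v : v != r -> ch (par v) = v.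
Proof.
move=> Hv. rewrite /ch. case: pickP => [u /andP[Hu /eqP E]|/(_ v)] /=.
- exact: par_inj.
- by rewrite Hv eqxx.
Qed.

Lemma treeP i : tree i -> ch i != r /\ par (ch i) = i.
Proof.
case/existsP => v /andP[Hv /eqP E]. rewrite -E ch_par //.
Qed.

Lemma ch_nr i : tree i -> ch i != r. Proof. by case/treeP. Qed.
Lemma par_ch i : tree i -> par (ch i) = i. Proof. by case/treeP. Qed.

Definition lf v := (deg v == 1%N) && (v != r).

Lemma lf_only x i : lf x -> touch i x -> i = par x.
Proof.
case/andP => /eqP Hd Hx Ht. apply/eqP/negPn/negP => Hne.
have := deg_ge2 Hne Ht. rewrite touch_par // eqxx => /(_ isT). by rewrite Hd.
Qed.

Lemma lf_tree x i : lf x -> touch i x -> tree i.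
Proof. move=> Hl Ht. rewrite (lf_only Hl Ht). apply: tree_par. by case/andP: Hl. Qed.

Lemma parent_not_lf u : u != r -> ~~ lf (p u).
Proof.
move=> Hu. apply/negP => Hl. have Hpu : p u != r by case/andP: Hl.
have E := lf_only Hl (_ : touch (par u) (p u)). rewrite touch_par // eqxx orbT in E.
have := par_inj Hu Hpu (E isT). move=> E2. have := p_neq Hu. by rewrite -E2 eqxx.
Qed.

Lemma lf_r : lf r = false. Proof. by rewrite /lf eqxx andbF. Qed.

Definition anc v w := (dep v <= dep w)%N && (iter (dep w - dep v) p w == v).

Lemma dep_iter n w : (n <= dep w)%N -> dep (iter n p w) = (dep w - n)%N.
Proof.
elim: n => [|n IH] Hn /=; first by rewrite subn0.
have IH' := IH (ltnW Hn).
have Hne : iter n p w != r.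
{ apply/eqP => E. move: IH'. rewrite E Hdr => /eqP. by rewrite eq_sym subn_eq0 leqNgt Hn. }
have := Hdp Hne. rewrite IH' => E. apply/eqP. rewrite -(eqn_add2r 1) !addn1 E subnSK //.
Qed.

Lemma iter_root w : iter (dep w) p w = r.
Proof. apply: dep0. by rewrite dep_iter // subnn. Qed.

Lemma anc_refl v : anc v v. Proof. by rewrite /anc leqnn subnn eqxx. Qed.
Lemma anc_root w : anc r w. Proof. by rewrite /anc Hdr leq0n subn0 iter_root eqxx. Qed.

Lemma anc_dep v w : anc v w -> (dep v <= dep w)%N. Proof. by case/andP. Qed.

Lemma anc_iter v w : anc v w -> iter (dep w - dep v) p w = v. Proof. by case/andP => _ /eqP. Qed.

Lemma anc_eqdep v w : anc v w -> dep v = dep w -> v = w.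
Proof. move=> H E. have := anc_iter H. by rewrite E subnn. Qed.

Lemma anc_p v u : u != r -> anc v (p u) -> anc v u.
Proof.
move=> Hu /andP[H1 /eqP H2]. rewrite /anc -(Hdp Hu) (leq_trans H1) //.
by rewrite subSn // iterSr H2 eqxx.
Qed.

Lemma anc_p' v u : u != v -> anc v u -> anc v (p u).
Proof.
move=> Huv H. have Hu : u != r.
{ apply/eqP => E. move: H. rewrite E /anc Hdr leqn0 => /andP[/eqP H _].
  move: Huv. by rewrite E (dep0 H) eqxx. }
have Hd := anc_dep H. have Hlt : (dep v < dep u)%N.
{ rewrite ltn_neqAle Hd andbT. apply/eqP => E. move: Huv. by rewrite (anc_eqdep H E) eqxx. }
have E1 := Hdp Hu.
have Hle : (dep v <= dep (p u))%N by lia.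
rewrite /anc Hle /=. have E2 : (dep u - dep v = (dep (p u) - dep v).+1)%N by lia.
move: (anc_iter H). rewrite E2 iterSr => ->. exact: eqxx.
Qed.

Lemma anc_r_only v : anc v r -> v = r.
Proof. move=> H. apply: dep0. move: (anc_dep H). by rewrite Hdr leqn0 => /eqP. Qed.

Lemma child_dep u : u != r -> (dep (p u) < dep u)%N.
Proof. move=> /Hdp <-. exact: ltnSn. Qed.

Lemma anc_trans u v w : anc u v -> anc v w -> anc u w.
Proof.
move=> /andP[H1 /eqP H2] /andP[H3 /eqP H4]. rewrite /anc (leq_trans H1 H3) /=.
have -> : (dep w - dep u = (dep v - dep u) + (dep w - dep v))%N.
{ by rewrite addnC addnBA // subnK. }
by rewrite iterD H4 H2.
Qed.

Lemma dep_ind (P : V -> Prop) : (forall w, (forall u, (dep u < dep w)%N -> P u) -> P w) -> forall w, P w.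
Proof.
move=> H w. have : (dep w <= dep w)%N by []. move: {-1}(dep w) => n. elim: n w => [|n IH] w Hw.
- apply: H => u. by rewrite leqn0 in Hw; rewrite (eqP Hw).
- apply: H => u Hu. apply: IH. by rewrite -ltnS (leq_trans Hu).
Qed.

Lemma child_exists v w : anc v w -> w != v -> exists u, [&& u != r, p u == v & anc u w].
Proof.
move: w; apply: dep_ind => w IH Ha Hwv.
have Hw : w != r. { apply/eqP => E. move: Ha Hwv. rewrite E => /anc_r_only ->. by rewrite eqxx. }
have Ha' := anc_p' Hwv Ha.
case Hpv: (p w == v).
- exists w. by rewrite Hw Hpv anc_refl.
- have [u /and3P[Hu Hpu Hau]] := IH (p w) (child_dep Hw) Ha' (negbT Hpv).
  exists u. by rewrite Hu Hpu (anc_p Hw Hau).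
Qed.

Lemma child_unique v w u u' : u != r -> p u = v -> anc u w -> u' != r -> p u' = v -> anc u' w -> u = u'.
Proof.
move=> Hu Hpu Ha Hu' Hpu' Ha'.
have E : dep u = dep u'. { by rewrite -(Hdp Hu) -(Hdp Hu') Hpu Hpu'. }
by rewrite -(anc_iter Ha) -(anc_iter Ha') E.
Qed.

Lemma child_anc v w u : u != r -> p u = v -> anc u w -> anc v w && (w != v).
Proof.
move=> Hu Hpu Ha. have Hvu : anc v u by apply: anc_p => //; rewrite Hpu anc_refl.
rewrite (anc_trans Hvu Ha) /=. apply/eqP => E. move: (anc_dep Ha). rewrite E -(Hdp Hu) Hpu.
by rewrite ltnn.
Qed.

Lemma sub_decomp (F : V -> R) v :
  \big[Rplus/0]_(w | anc v w) F w =
  F v + \big[Rplus/0]_(u | (u != r) && (p u == v)) \big[Rplus/0]_(w | anc u w) F w.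
Proof.
rewrite (bigD1 v) ?anc_refl //=. congr (_ + _).
under [in RHS]eq_bigr do rewrite big_mkcond.
rewrite exchange_big /= big_mkcond /=. apply: eq_bigr => w _.
rewrite -big_mkcondr /=.
case Hc: (anc v w && (w != v)).
- case/andP: Hc => Ha Hwv. have [u0 /and3P[Hu0 Hpu0 Hau0]] := child_exists Ha Hwv.
  rewrite (big_pred1 u0) // => u /=. apply/idP/idP.
  + move=> /andP[/andP[Hu /eqP Hpu] Hau]. apply/eqP. exact: (child_unique Hu Hpu Hau Hu0 (eqP Hpu0) Hau0).
  + move/eqP => ->. by rewrite Hu0 Hpu0 Hau0.
- rewrite big_pred0 // => u. apply/negP => /andP[/andP[Hu /eqP Hpu] Hau].
  by rewrite (child_anc Hu Hpu Hau) in Hc.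
Qed.

Definition isK i := ~~ tree i || lf (ch i).
Variable b : 'I_N.
Hypothesis HbK : isK b \/ (forall i, ~~ isK i).
Hypothesis HK2 : ~~ tree b -> exists a, isK a && (a != b).
Definition mK := #|[pred i | isK i]|.
Definition c i := if i == b then 1 - INR mK else 1.

Definition sv w := \big[Rplus/0]_(i | ~~ tree i)
   ((if o i == w then c i / 2 else 0) + (if tau i == w then c i / 2 else 0))
   + (if lf w then c (par w) else 0).
Definition SS v := \big[Rplus/0]_(w | anc v w) sv w.
Definition sig i := if tree i then SS (ch i) else c i / 2.
Definition len i := if tree i then (if lf (ch i) then len_lf (sig i) else 2 * PI) else len_nt (sig i).
Definition flip i := tree i && (o i == ch i).
Definition fr i t := if flip i then Fv (sig i) (len i - t) else Fv (sig i) t.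
Definition dfr i t := if flip i then - Fd (sig i) (len i - t) else Fd (sig i) t.

Lemma len_pos i : 0 < len i.
Proof.
rewrite /len. case: (tree i); last exact: nt_pos. case: (lf _); first exact: lf_pos.
have := PI_RGT_0. lra.
Qed.

Lemma fr_der i t : is_derive (fr i) t (dfr i t).
Proof. rewrite /fr /dfr. case: (flip i); [exact: Fv_der | exact: Fv_der']. Qed.
Lemma dfr_der i t : is_derive (dfr i) t (- fr i t).
Proof. rewrite /fr /dfr. case: (flip i); [exact: Fd_der | exact: Fd_der']. Qed.

Lemma tree_cases i : tree i ->
  (o i = p (ch i) /\ tau i = ch i /\ flip i = false) \/ (o i = ch i /\ tau i = p (ch i) /\ flip i = true).
Proof.
move=> Ht. have [Hu Hpu] := treeP Ht. have := Hpar Hu. rewrite Hpu /flip Ht /=.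
case/orP => /andP[/eqP -> /eqP ->].
- left. split=> //. split=> //. apply/negbTE. exact: p_neq Hu.
- right. by rewrite eqxx.
Qed.

Definition cont v i := (if o i == v then dfr i 0 else 0) - (if tau i == v then dfr i (len i) else 0).

Lemma cont_nt v i : ~~ tree i ->
  cont v i = (if o i == v then c i / 2 else 0) + (if tau i == v then c i / 2 else 0).
Proof.
move=> Hn. rewrite /cont /dfr /flip /len /sig (negbTE Hn) /= Fd0 nt_Fd.
case: (o i == v); case: (tau i == v); ring.
Qed.

Lemma cont_tree v i : tree i ->
  cont v i = (if p (ch i) == v then sig i else 0) - (if (ch i == v) && ~~ lf (ch i) then sig i else 0).
Proof.
move=> Ht. have Hu := ch_nr Ht.
rewrite /cont /dfr /len Ht.
case: (tree_cases Ht) => [[-> [-> ->]] | [-> [-> ->]]]; rewrite ?subrr ?Rminus_0_r ?Rminus_eq_0.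
- case Hl: (lf (ch i)) => /=.
  + rewrite lf_Fd Fd0. case: (p (ch i) == v); case: (ch i == v) => /=; ring.
  + rewrite tp_Fd Fd0. case: (p (ch i) == v); case: (ch i == v) => /=; ring.
- case Hl: (lf (ch i)) => /=.
  + rewrite lf_Fd Fd0. case: (p (ch i) == v); case: (ch i == v) => /=; ring.
  + rewrite tp_Fd Fd0. case: (p (ch i) == v); case: (ch i == v) => /=; ring.
Qed.

Lemma reindex_tree (G : 'I_N -> R) :
  \big[Rplus/0]_(i | tree i) G i = \big[Rplus/0]_(u | u != r) G (par u).
Proof.
rewrite (reindex_onto par ch); last by move=> i Hi; exact: par_ch.
apply: eq_bigl => u. case Hu: (u != r).
- by rewrite tree_par // ch_par // eqxx.
- case Ht: (tree (par u)) => //=. have := ch_nr Ht. move/negbFE: Hu => /eqP ->.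
  by move/negbTE.
Qed.

Lemma cont_sum v : \big[Rplus/0]_(i < N) cont v i =
  sv v - (if lf v then c (par v) else 0)
  + \big[Rplus/0]_(u | (u != r) && (p u == v)) SS u - (if (v != r) && ~~ lf v then SS v else 0).
Proof.
rewrite (bigID tree) /= Rplus_comm.
have -> : \big[Rplus/0]_(i | ~~ tree i) cont v i = sv v - (if lf v then c (par v) else 0).
{ rewrite /sv. under eq_bigr => i Hi do rewrite cont_nt //. ring. }
suff -> : \big[Rplus/0]_(i | tree i) cont v i = \big[Rplus/0]_(u | (u != r) && (p u == v)) SS u - (if (v != r) && ~~ lf v then SS v else 0) by ring.
under eq_bigr => i Hi do rewrite cont_tree //. rewrite reindex_tree.
have E : forall u, u != r -> ((if p (ch (par u)) == v then sig (par u) else 0) -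
   (if (ch (par u) == v) && ~~ lf (ch (par u)) then sig (par u) else 0)) =
   (if p u == v then SS u else 0) - (if (u == v) && ~~ lf u then SS u else 0).
{ move=> u Hu. by rewrite /sig tree_par // ch_par. }
under eq_bigr => u Hu do rewrite E //. rewrite big_Rminus -big_mkcondr /=.
congr (_ - _).
case Hv: (v != r) => /=.
- rewrite (bigD1 v) //= eqxx /= big1 ?Rplus_0_r // => u /andP[_ Huv]. by rewrite (negbTE Huv).
- rewrite big1 // => u Hu. case Huv: (u == v) => //=. move/eqP: Huv Hu => ->. by rewrite Hv.
Qed.

Lemma total_c : \big[Rplus/0]_(i | isK i) c i = 0.
Proof.
case: HbK => [HbK'|Hno]; last by rewrite big_pred0 // => i; apply/negbTE.
rewrite (bigD1 b) //= /c eqxx.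
have -> : \big[Rplus/0]_(i | isK i && (i != b)) (if i == b then 1 - INR mK else 1) =
          \big[Rplus/0]_(i | isK i && (i != b)) 1.
{ apply: eq_bigr => i /andP[_ /negbTE ->]. by []. }
rewrite sumR_const.
have E : mK = (1 + #|(fun i : 'I_N => isK i && (i != b))|)%N.
{ rewrite /mK (cardD1 b) inE HbK'. congr (_ + _)%N. apply: eq_card => i. rewrite !inE andbC. by []. }
rewrite E plus_INR. change (INR 1) with 1. match goal with |- 1 - (1 + ?a) + ?b = 0 => have -> : b = a by [] end. ring.
Qed.

Lemma sum_ifeq (y : V) (a : R) : \big[Rplus/0]_(w : V) (if y == w then a else 0) = a.
Proof.
rewrite (bigD1 y) //= eqxx big1 => [|w]; first ring. by rewrite eq_sym => /negbTE ->.
Qed.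

Lemma SS_r_total : SS r = \big[Rplus/0]_(i | isK i) c i.
Proof.
rewrite /SS (eq_bigl predT); last by move=> w; rewrite anc_root.
rewrite /sv big_split /= exchange_big /=.
rewrite [RHS](bigID tree) /= [RHS]Rplus_comm. congr (_ + _).
- have -> : \big[Rplus/0]_(i | isK i && ~~ tree i) c i = \big[Rplus/0]_(i | ~~ tree i) c i.
  { apply: eq_bigl => i. rewrite /isK. by case: (tree i); case: (lf (ch i)). }
  apply: eq_bigr => i _. rewrite big_split /= !sum_ifeq. field.
- have -> : \big[Rplus/0]_(i | isK i && tree i) c i = \big[Rplus/0]_(i | tree i) (if lf (ch i) then c i else 0).
  { rewrite -big_mkcondr. apply: eq_bigl => i. rewrite /isK. by case: (tree i); case: (lf (ch i)). }
  rewrite reindex_tree (bigD1 r) //= lf_r Rplus_0_l.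
  apply: eq_bigr => u Hu. by rewrite ch_par.
Qed.

Lemma HS0 : SS r = 0.
Proof. by rewrite SS_r_total total_c. Qed.

Lemma cont_total v : \big[Rplus/0]_(i < N) cont v i = 0.
Proof.
case Hl: (lf v).
- rewrite big1 // => i _. case Ht: (touch i v); last first.
  + rewrite /cont. move: Ht. rewrite /T2.touch. case: (o i == v); case: (tau i == v) => //= _. ring.
  + have Hi := lf_only Hl Ht. have Hv : v != r by case/andP: Hl.
    rewrite Hi cont_tree ?tree_par // ch_par // Hl eqxx /= (negbTE (p_neq Hv)). ring.
- rewrite cont_sum Hl.
  have D := sub_decomp sv v. rewrite -/(SS v) in D.
  have D' : \big[Rplus/0]_(u | (u != r) && (p u == v)) SS u = SS v - sv v by rewrite D /SS; ring.
  rewrite D' /=. case Hv: (v != r) => /=; first ring.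
  move/negbFE: Hv => /eqP ->. rewrite HS0. ring.
Qed.

Lemma kirchhoff_R v :
  \big[Rplus/0]_(i | o i == v) dfr i 0 - \big[Rplus/0]_(i | tau i == v) dfr i (len i) = 0.
Proof.
rewrite big_mkcond [X in _ - X]big_mkcond -big_Rminus /=. exact: cont_total.
Qed.

Definition val x := if lf x then Fv (sig (par x)) (len (par x)) else 1.

Lemma touch_o i : touch i (o i). Proof. by rewrite /T2.touch eqxx. Qed.
Lemma touch_t i : touch i (tau i). Proof. by rewrite /T2.touch eqxx orbT. Qed.

Lemma fr0 i : fr i 0 = val (o i).
Proof.
rewrite /val /fr. case Hl: (lf (o i)).
- have Hi := lf_only Hl (touch_o i). have Hv : o i != r by case/andP: Hl.
  have Hc : ch i = o i by rewrite {1}Hi ch_par. rewrite /flip (lf_tree Hl (touch_o i)) Hc eqxx /= Rminus_0_r. by rewrite -Hi.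
- case Hf: (flip i); last exact: Fv0.
  move: Hf => /andP[Ht /eqP Ho]. rewrite /len Ht -Ho Hl Rminus_0_r. exact: tp_Fv.
Qed.

Lemma frl i : fr i (len i) = val (tau i).
Proof.
rewrite /val /fr. case Hl: (lf (tau i)).
- have Hi := lf_only Hl (touch_t i). have Hv : tau i != r by case/andP: Hl.
  have Hc : ch i = tau i by rewrite {1}Hi ch_par.
  have Hf : flip i = false.
  { case: (tree_cases (lf_tree Hl (touch_t i))) => [[_ [_ ->]]|[Ho [Ht _]]] //.
    move: (p_neq Hv). by rewrite -{1}Hc -Ht eqxx. }
  rewrite Hf. by rewrite -Hi.
- case Hf: (flip i); first by rewrite Rminus_eq_0 Fv0.
  rewrite /len. case Ht: (tree i); last exact: nt_Fv.
  case: (tree_cases Ht) => [[_ [Htau _]]|[_ [_ Hf']]]; last by rewrite Hf' in Hf.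
  rewrite -Htau Hl. exact: tp_Fv.
Qed.

Lemma sol_f : solution o tau len (1 ^ 2) (fun i t => RtoC (fr i t)) (fun i t => RtoC (dfr i t)).
Proof.
split.
- move=> i t _. apply: derC_RtoC. exact: fr_der.
- move=> i t _. have -> : Cmult (RtoC (- 1 ^ 2)) (RtoC (fr i t)) = RtoC (- fr i t).
  { rewrite -RtoC_mult. f_equal. ring. }
  apply: derC_RtoC. exact: dfr_der.
- split.
  + move=> i j E. by rewrite !fr0 E.
  + move=> i j E. by rewrite fr0 frl E.
  + move=> i j E. by rewrite !frl E.
- move=> v. rewrite -!(big_morph RtoC RtoC_plus erefl) -RtoC_minus. f_equal. exact: kirchhoff_R.
Qed.

Lemma mK_ge2 : ~~ tree b -> (2 <= mK)%N.
Proof.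
move=> Hb. have HbK' : isK b by rewrite /isK Hb.
case: (HK2 Hb) => a /andP[Ha Hab]. rewrite /mK (cardD1 b) inE HbK' add1n ltnS.
apply/card_gt0P. exists a. by rewrite !inE Hab Ha.
Qed.

Lemma Hnt i : ~~ tree i -> sig i <> 0.
Proof.
move=> Hn. rewrite /sig (negbTE Hn) /c. case E: (i == b); last lra.
move/eqP: E => E. rewrite E in Hn. have := mK_ge2 Hn => /leP /le_INR H2.
simpl in H2; lra.
Qed.

Lemma dep_ind_down (P : V -> Prop) :
  (forall w, (forall u, (dep w < dep u)%N -> P u) -> P w) -> forall w, P w.
Proof.
move=> H w. set M := (\max_(x : V) dep x)%N.
have HM : forall x, (dep x <= M)%N by move=> x; apply: leq_bigmax.
have : (M - dep w <= M - dep w)%N by []. move: {-1}(M - dep w)%N => n.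
elim: n w => [|n IH] w Hw.
- apply: H => u Hu. have := HM u. lia.
- apply: H => u Hu. apply: IH. have := HM u. lia.
Qed.

Section Uniq.
Variables (g dg : 'I_N -> R -> C).
Hypothesis Hsol : solution o tau len (1 ^ 2) g dg.

Definition gval x := match [pick i | o i == x] with
  | Some i => g i 0
  | None => match [pick i | tau i == x] with Some i => g i (len i) | None => RtoC 0 end end.

Lemma g0v i : g i 0 = gval (o i).
Proof.
case: Hsol => _ _ [C1 C2 C3] _. rewrite /gval. case: pickP => [j /eqP Hj|H].
- apply: C1. by rewrite Hj.
- by move: (H i); rewrite eqxx.
Qed.

Lemma glv i : g i (len i) = gval (tau i).
Proof.
case: Hsol => _ _ [C1 C2 C3] _. rewrite /gval. case: pickP => [j /eqP Hj|H].
- symmetry. apply: C2. by rewrite Hj.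
- case: pickP => [j /eqP Hj|H'].
  + apply: C3. by rewrite Hj.
  + by move: (H' i); rewrite eqxx.
Qed.

Lemma ode_g i t : 0 <= t <= len i ->
   g i t = Cplus (Cmult (g i 0) (RtoC (cos t))) (Cmult (dg i 0) (RtoC (sin t))) /\
   dg i t = Cplus (Cmult (g i 0) (RtoC (- sin t))) (Cmult (dg i 0) (RtoC (cos t))).
Proof.
case: Hsol => H1 H2 _ _. apply: (ode_C (lam := 1 ^ 2)); first ring.
- exact: H1.
- exact: H2.
Qed.

Lemma ode_f i t : 0 <= t <= len i ->
   RtoC (fr i t) = Cplus (Cmult (RtoC (fr i 0)) (RtoC (cos t))) (Cmult (RtoC (dfr i 0)) (RtoC (sin t))) /\
   RtoC (dfr i t) = Cplus (Cmult (RtoC (fr i 0)) (RtoC (- sin t))) (Cmult (RtoC (dfr i 0)) (RtoC (cos t))).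
Proof.
case: sol_f => H1 H2 _ _.
apply: (ode_C (g := fun t => RtoC (fr i t)) (dg := fun t => RtoC (dfr i t)) (lam := 1 ^ 2)); first ring.
- exact: H1.
- exact: H2.
Qed.

Definition fullm cc i := forall t, 0 <= t <= len i ->
  g i t = Cmult cc (RtoC (fr i t)) /\ dg i t = Cmult cc (RtoC (dfr i t)).

Lemma edge_match cc i : g i 0 = Cmult cc (RtoC (fr i 0)) -> dg i 0 = Cmult cc (RtoC (dfr i 0)) -> fullm cc i.
Proof.
move=> E0 E1 t Ht. have [A1 A2] := ode_g Ht. have [B1 B2] := ode_f Ht.
rewrite A1 A2 B1 B2 E0 E1. split; ring.
Qed.

Lemma len_range i : 0 <= len i <= len i.
Proof. have := len_pos i. lra. Qed.
Lemma zero_range i : 0 <= 0 <= len i.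
Proof. have := len_pos i. lra. Qed.

Definition cc := gval r.

Lemma claim1 x : ~~ lf x -> gval x = cc.
Proof.
move: x; apply: dep_ind => x IH Hl. case Hx: (x != r); last by move/negbFE: Hx => /eqP ->.
have Hpl := parent_not_lf Hx.
have E : gval x = gval (p x).
{ have Hl2 : len (par x) = 2 * PI by rewrite /len tree_par // ch_par // (negbTE Hl).
  have [A _] := ode_g (len_range (par x)). rewrite Hl2 cos_2PI sin_2PI in A.
  have A' : g (par x) (len (par x)) = g (par x) 0.
  { rewrite Hl2 A. apply injective_projections; simpl; ring. }
  rewrite glv g0v in A'.
  case/orP: (Hpar Hx) => /andP[/eqP Ho /eqP Ht]; rewrite Ho Ht in A'; by rewrite A'. }
rewrite E. apply: IH => //. exact: child_dep.
Qed.

Lemma nt_not_lf i x : ~~ tree i -> touch i x -> ~~ lf x.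
Proof. move=> Hn Ht. apply/negP => Hl. by rewrite (lf_tree Hl Ht) in Hn. Qed.

Lemma claim2 i : ~~ tree i -> fullm cc i.
Proof.
move=> Hn.
have G0 : g i 0 = Cmult cc (RtoC (fr i 0)).
{ rewrite g0v fr0 claim1; last exact: nt_not_lf Hn (touch_o i).
  rewrite /val (negbTE (nt_not_lf Hn (touch_o i))). apply injective_projections; simpl; ring. }
have GL : g i (len i) = Cmult cc (RtoC (fr i (len i))).
{ rewrite glv frl claim1; last exact: nt_not_lf Hn (touch_t i).
  rewrite /val (negbTE (nt_not_lf Hn (touch_t i))). apply injective_projections; simpl; ring. }
apply: edge_match => //.
have Hs : sin (len i) <> 0 by rewrite /len (negbTE Hn); apply: nt_sin_nz; apply: Hnt.
have [A _] := ode_g (len_range i). have [B _] := ode_f (len_range i).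
apply: (cancel_lin Hs).
have E1 : Cmult (dg i 0) (RtoC (sin (len i))) = Cminus (g i (len i)) (Cmult (g i 0) (RtoC (cos (len i)))) by rewrite A; ring.
have E2 : Cmult (RtoC (dfr i 0)) (RtoC (sin (len i))) = Cminus (RtoC (fr i (len i))) (Cmult (RtoC (fr i 0)) (RtoC (cos (len i)))) by rewrite B; ring.
transitivity (Cminus (Cmult (dg i 0) (RtoC (sin (len i)))) (Cmult cc (Cmult (RtoC (dfr i 0)) (RtoC (sin (len i)))))); first ring.
rewrite E1 E2 GL G0. ring.
Qed.

Definition contG x i := Cminus (if o i == x then dg i 0 else RtoC 0) (if tau i == x then dg i (len i) else RtoC 0).

Lemma contG_total x : \big[Cplus/RtoC 0]_(i < N) contG x i = RtoC 0.
Proof.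
case: Hsol => _ _ _ K. have := K x.
rewrite big_mkcond [X in Cminus _ X]big_mkcond -big_Cminus. by [].
Qed.

Lemma kirch_reduce x i0 : (forall i, i != i0 -> contG x i = Cmult cc (RtoC (cont x i))) ->
  contG x i0 = Cmult cc (RtoC (cont x i0)).
Proof.
move=> H. have T := contG_total x. rewrite (bigD1 i0) //= in T.
rewrite (eq_bigr _ H) big_Cscal -big_RtoC in T.
have R0 := cont_total x. rewrite (bigD1 i0) //= in R0.
move: T R0. set X := \big[Rplus/0]_(i < N | i != i0) cont x i. move=> T R0.
have S : X = - cont x i0 by lra.
rewrite S RtoC_opp in T.
transitivity (Cplus (Cplus (contG x i0) (Cmult cc (Copp (RtoC (cont x i0))))) (Cmult cc (RtoC (cont x i0)))); first ring.
rewrite T. ring.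
Qed.

Lemma fullm_cont x i : fullm cc i -> contG x i = Cmult cc (RtoC (cont x i)).
Proof.
move=> H. have [A0 B0] := H 0 (zero_range i). have [AL BL] := H (len i) (len_range i).
rewrite /contG /cont B0 BL. case: (o i == x); case: (tau i == x) => /=;
  apply injective_projections; simpl; ring.
Qed.

Lemma notouch_cont x i : ~~ touch i x -> contG x i = Cmult cc (RtoC (cont x i)).
Proof.
rewrite /T2.touch negb_or => /andP[/negbTE H1 /negbTE H2].
rewrite /contG /cont H1 H2. apply injective_projections; simpl; ring.
Qed.

Lemma match_d0 i : cos (len i) <> 0 -> g i 0 = Cmult cc (RtoC (fr i 0)) ->
  dg i (len i) = Cmult cc (RtoC (dfr i (len i))) -> dg i 0 = Cmult cc (RtoC (dfr i 0)).
Proof.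
move=> Hc G0 DL. have [_ A] := ode_g (len_range i). have [_ B] := ode_f (len_range i).
apply: (cancel_lin Hc).
transitivity (Cplus (Cminus (dg i (len i)) (Cmult cc (RtoC (dfr i (len i)))))
   (Cmult (Cminus (g i 0) (Cmult cc (RtoC (fr i 0)))) (RtoC (sin (len i))))).
- rewrite A B RtoC_opp. ring.
- rewrite DL G0. ring.
Qed.

Lemma match_g0 i : cos (len i) <> 0 -> dg i 0 = Cmult cc (RtoC (dfr i 0)) ->
  g i (len i) = Cmult cc (RtoC (fr i (len i))) -> g i 0 = Cmult cc (RtoC (fr i 0)).
Proof.
move=> Hc D0 GL. have [A _] := ode_g (len_range i). have [B _] := ode_f (len_range i).
apply: (cancel_lin Hc).
transitivity (Cminus (Cminus (g i (len i)) (Cmult cc (RtoC (fr i (len i)))))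
   (Cmult (Cminus (dg i 0) (Cmult cc (RtoC (dfr i 0)))) (RtoC (sin (len i))))).
- rewrite A B. ring.
- rewrite GL D0. ring.
Qed.

Lemma cc1 : Cmult cc (RtoC 1) = cc.
Proof. apply injective_projections; simpl; ring. Qed.

Lemma claim3 u : lf u -> fullm cc (par u).
Proof.
move=> Hl. have Hu : u != r by case/andP: Hl.
have Hpl := parent_not_lf Hu.
have Hcu : ch (par u) = u by rewrite ch_par.
have Hc : cos (len (par u)) <> 0 by rewrite /len tree_par // Hcu Hl; apply: lf_cos_nz.
have K : contG u (par u) = Cmult cc (RtoC (cont u (par u))).
{ apply: kirch_reduce => i Hi. apply: notouch_cont. apply/negP => Ht. move/negP: Hi; apply. apply/eqP. exact: lf_only Hl Ht. }
have C0 : cont u (par u) = 0.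
{ rewrite cont_tree ?tree_par // Hcu eqxx Hl /= (negbTE (p_neq Hu)). ring. }
rewrite C0 in K.
have Hpv : val (p u) = 1 by rewrite /val (negbTE Hpl).
case/orP: (Hpar Hu) => /andP[/eqP Ho /eqP Ht].
- have G0 : g (par u) 0 = Cmult cc (RtoC (fr (par u) 0)) by rewrite g0v fr0 Ho claim1 // Hpv cc1.
  apply: edge_match => //. apply: match_d0 => //.
  have Dl : dfr (par u) (len (par u)) = 0.
  { move: C0. rewrite /cont Ho Ht eqxx (negbTE (p_neq Hu)). lra. }
  move: K. rewrite /contG Ho Ht eqxx (negbTE (p_neq Hu)) Dl => K.
  transitivity (Copp (Cminus (RtoC 0) (dg (par u) (len (par u))))); first ring.
  rewrite K. apply injective_projections; simpl; ring.
- have D0 : dg (par u) 0 = Cmult cc (RtoC (dfr (par u) 0)).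
  { have Dz : dfr (par u) 0 = 0.
    { move: C0. rewrite /cont Ho Ht eqxx (negbTE (p_neq Hu)). lra. }
    move: K. rewrite /contG Ho Ht eqxx (negbTE (p_neq Hu)) Dz => K.
    transitivity (Cminus (dg (par u) 0) (RtoC 0)); first ring.
    rewrite K. apply injective_projections; simpl; ring. }
  apply: edge_match => //. apply: match_g0 => //.
  by rewrite glv frl Ht claim1 // Hpv cc1.
Qed.

Lemma claim4 u : u != r -> ~~ lf u -> fullm cc (par u).
Proof.
move: u; apply: dep_ind_down => u IH Hu Hl.
have Hcu : ch (par u) = u by rewrite ch_par.
have Hlen : len (par u) = 2 * PI by rewrite /len tree_par // Hcu (negbTE Hl).
have K : contG u (par u) = Cmult cc (RtoC (cont u (par u))).
{ apply: kirch_reduce => i Hi. case Ht: (touch i u); last by apply: notouch_cont; rewrite Ht.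
  case Htr: (tree i); last by apply: fullm_cont; apply: claim2; rewrite Htr.
  have [Hw Hpw] := treeP Htr. set w := ch i in Hw Hpw.
  have : touch (par w) u by rewrite Hpw.
  rewrite touch_par // => /orP[/eqP E|/eqP E].
  - move: Hi. by rewrite -Hpw -E eqxx.
  - apply: fullm_cont. rewrite -Hpw. case Hlw: (lf w); first exact: claim3.
    apply: IH => //; last by rewrite Hlw. rewrite E. exact: child_dep. }
have Hpv : val u = 1 by rewrite /val (negbTE Hl).
have Hpl := parent_not_lf Hu.
have Hppv : val (p u) = 1 by rewrite /val (negbTE Hpl).
case/orP: (Hpar Hu) => /andP[/eqP Ho /eqP Ht].
- have G0 : g (par u) 0 = Cmult cc (RtoC (fr (par u) 0)) by rewrite g0v fr0 Ho claim1 // Hppv cc1.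
  apply: edge_match => //. apply: match_d0 => //; first by rewrite Hlen cos_2PI; lra.
  move: K. rewrite /contG /cont Ho Ht eqxx (negbTE (p_neq Hu)) => K.
  transitivity (Copp (Cminus (RtoC 0) (dg (par u) (len (par u))))); first ring.
  rewrite K. apply injective_projections; simpl; ring.
- have G0 : g (par u) 0 = Cmult cc (RtoC (fr (par u) 0)) by rewrite g0v fr0 Ho claim1 // Hpv cc1.
  apply: edge_match => //.
  move: K. rewrite /contG /cont Ho Ht eqxx (negbTE (p_neq Hu)) => K.
  transitivity (Cminus (dg (par u) 0) (RtoC 0)); first ring.
  rewrite K. apply injective_projections; simpl; ring.
Qed.

Lemma uniq_main i t : 0 <= t <= len i -> g i t = Cmult cc (RtoC (fr i t)).
Proof.
move=> Ht. case Htr: (tree i).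
- have [Hu Hpu] := treeP Htr. rewrite -Hpu. case Hl: (lf (ch i)).
  + by case: (claim3 Hl (t := t)); rewrite ?Hpu.
  + by case: (claim4 Hu (negbT Hl) (t := t)); rewrite ?Hpu.
- by case: (claim2 (negbT Htr) Ht).
Qed.

End Uniq.
Definition contrib_in i w := (~~ tree i && touch i w) || (tree i && (ch i == w) && lf w).

Lemma SS_pos v w0 : anc v w0 -> (lf w0 || [exists i, ~~ tree i && touch i w0]) ->
  (forall w, anc v w -> ~~ contrib_in b w) -> 0 < SS v.
Proof.
move=> Hw0 Hc Hb.
have Cnt : forall w i, anc v w -> ~~ tree i -> touch i w -> c i = 1.
{ move=> w i Hw Hn Ht. rewrite /c. case E: (i == b) => //. move/eqP: E => E.
  have := Hb w Hw. by rewrite /contrib_in -E Hn Ht. }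
have Clf : forall w, anc v w -> lf w -> c (par w) = 1.
{ move=> w Hw Hl. have Hwr : w != r by case/andP: Hl.
  rewrite /c. case E: (par w == b) => //. move/eqP: E => E.
  have := Hb w Hw. by rewrite /contrib_in -E tree_par // ch_par // eqxx Hl orbT. }
have Hnt0 : forall w, anc v w -> 0 <= \big[Rplus/0]_(i | ~~ tree i)
   ((if o i == w then c i / 2 else 0) + (if tau i == w then c i / 2 else 0)).
{ move=> w Hw. apply: big_R_ge0 => i Hn.
  case E1: (o i == w); case E2: (tau i == w); rewrite ?(Cnt w i Hw Hn) /T2.touch ?E1 ?E2 ?orbT //; lra. }
have Hsv : forall w, anc v w -> 0 <= sv w.
{ move=> w Hw. rewrite /sv. have := Hnt0 w Hw. case Hl: (lf w); last lra. rewrite Clf //. lra. }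
have Hsv0 : 0 < sv w0.
{ rewrite /sv. case Hl: (lf w0).
  - rewrite Clf //. have := Hnt0 w0 Hw0. lra.
  - rewrite Hl /= in Hc. case/existsP: Hc => i /andP[Hn Ht].
    rewrite (bigD1 i) //=. have := Cnt w0 i Hw0 Hn Ht => Ci.
    have : 0 <= \big[Rplus/0]_(i0 | ~~ tree i0 && (i0 != i))
      ((if o i0 == w0 then c i0 / 2 else 0) + (if tau i0 == w0 then c i0 / 2 else 0)).
    { apply: big_R_ge0 => i' /andP[Hn' _]. case E1: (o i' == w0); case E2: (tau i' == w0);
      rewrite ?(Cnt w0 i' Hw0 Hn') /T2.touch ?E1 ?E2 ?orbT //; lra. }
    move: Ht. rewrite /T2.touch Ci. case: (o i == w0); case: (tau i == w0) => //= _; lra. }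
rewrite /SS (bigD1 w0) //=. have : 0 <= \big[Rplus/0]_(w | anc v w && (w != w0)) sv w.
{ apply: big_R_ge0 => w /andP[Hw _]. exact: Hsv. }
lra.
Qed.

Lemma sub_contrib v : v != r -> exists w0, anc v w0 && (lf w0 || [exists i, ~~ tree i && touch i w0]).
Proof.
clear HbK HK2.
move=> Hv. case: (@arg_maxnP _ v (fun w => anc v w) dep (anc_refl v)) => w0 Hw0 Hmax.
exists w0. rewrite Hw0 /=. apply/negPn/negP. rewrite negb_or => /andP[Hl /existsP Hne].
have Hw0r : w0 != r. { apply/eqP => E. move: Hw0. rewrite E => /anc_r_only E'. by rewrite E' eqxx in Hv. }
have Honly : forall i, touch i w0 -> (true && (i == par w0)) || (false && (i == par w0)).
{ move=> i Ht. rewrite orbF /=. case Htr: (tree i); last first.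
  { exfalso. apply: Hne. exists i. by rewrite Htr Ht. }
  have [Hu Hpu] := treeP Htr. move: Ht. rewrite -Hpu touch_par // => /orP[/eqP E|/eqP E].
  - by rewrite E.
  - exfalso. have Hau : anc v (ch i) by apply: anc_p => //; rewrite -E.
    have := Hmax _ Hau. have := child_dep Hu. rewrite -E. lia. }
have := deg_only2 Honly. rewrite ends_par // eqxx (p_neq' Hw0r) /= => Hd.
have Hd1 : (0 < deg w0)%N by apply: (deg_ge1 (i := par w0)); rewrite touch_par // eqxx.
have : deg w0 = 1%N by lia. move=> E. move/negP: Hl; apply. by rewrite /lf E eqxx Hw0r.
Qed.

Hypothesis HA2 : forall x, deg x <> 2%N.
Hypothesis Hr1 : deg r = 1%N -> forall x, deg x = 1%N.

Lemma comp_contrib v : v != r -> (deg v != 1%N) || (deg (p v) != 1%N) ->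
  (forall i, ~~ tree i -> anc v (o i) = anc v (tau i)) ->
  exists b', isK b' && [forall w, anc v w ==> ~~ contrib_in b' w].
Proof.
clear HbK HK2.
move=> Hv Hdeg Hcross.
have Hnr : ~~ anc v r by apply/negP => /anc_r_only E; rewrite E eqxx in Hv.
case: (@arg_maxnP _ r (fun w => ~~ anc v w) dep Hnr) => w1 Hw1 Hmax.
case Hl: (lf w1).
{ have Hw1r : w1 != r by case/andP: Hl.
  exists (par w1). rewrite /isK tree_par // ch_par // Hl /=. apply/forallP => w. apply/implyP => Hw.
  rewrite /contrib_in tree_par // ch_par //= . apply/negP => /andP[/eqP E _]. by rewrite E Hw in Hw1. }
case Hex: [exists i, ~~ tree i && touch i w1].
{ case/existsP: Hex => i /andP[Hn Ht]. exists i. rewrite /isK Hn /=. apply/forallP => w. apply/implyP => Hw.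
  rewrite /contrib_in (negbTE Hn) /= orbF. apply/negP => Htw.
  have Hao : anc v (o i) = true.
  { move: Htw Hw. rewrite /T2.touch => /orP[/eqP E|/eqP E] Hw'.
    - by rewrite E. - by rewrite Hcross // E. }
  move: Ht. rewrite /T2.touch => /orP[/eqP E|/eqP E].
  - by rewrite -E Hao in Hw1.
  - by rewrite -E -Hcross // Hao in Hw1. }
exfalso.
have Honly : forall i, touch i w1 -> ((w1 != r) && (i == par w1)) || ((p v == w1) && (i == par v)).
{ move=> i Ht. case Htr: (tree i); last first.
  { exfalso. move/negbT/negP: Hex; apply. apply/existsP. exists i. by rewrite Htr Ht. }
  have [Hu Hpu] := treeP Htr. move: Ht. rewrite -Hpu touch_par // => /orP[/eqP E|/eqP E].
  - rewrite -E in Hu *. by rewrite Hu eqxx.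
  - case Hau: (anc v (ch i)).
    + case Huv: (ch i == v).
      * move/eqP: Huv => Huv. rewrite Huv in E *. by rewrite -E !eqxx orbT.
      * have := anc_p' (negbT Huv) Hau. by rewrite -E (negbTE Hw1).
    + have := Hmax _ (negbT Hau). have := child_dep Hu. rewrite -E => A B. have := leq_trans A B. by rewrite ltnn. }
have Hd := deg_only2 Honly.
have Hw1v : w1 != v by apply/eqP => E; move: Hw1; rewrite E anc_refl.
have Hle2 : (deg w1 <= 2)%N.
{ apply: (leq_trans Hd). case Hr: (w1 != r); case Hp: (p v == w1); rewrite ?mul0n ?mul1n ?add0n ?addn0 //.
  - have Hp' : (w1 == p v) = true by rewrite eq_sym.
    rewrite !ends_par //= eqxx (p_neq' Hr) (negbTE Hw1v) Hp'. by [].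
  - rewrite ends_par //= eqxx (p_neq' Hr). by [].
  - have Hp' : (w1 == p v) = true by rewrite eq_sym.
    rewrite ends_par //= (negbTE Hw1v) Hp'. by []. }
have Hge1 : (0 < deg w1)%N.
{ case Hr: (w1 != r).
  - apply: (deg_ge1 (i := par w1)). by rewrite touch_par // eqxx.
  - move/negbFE: Hr => /eqP Er. 
    have Hpv : p v = r.
    { apply/eqP/negPn/negP => Hpr.
      have Hna : ~~ anc v (p v).
      { apply/negP => Ha. have := anc_dep Ha. have := child_dep Hv => A B. have := leq_trans A B. by rewrite ltnn. }
      have := Hmax _ Hna. rewrite Er Hdr. move=> H0. have H1 := Hdp Hpr. move: H0. rewrite -H1. by []. }
    apply: (deg_ge1 (i := par v)). by rewrite touch_par // Hpv Er eqxx orbT. }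
have E1 : deg w1 = 1%N by have := @HA2 w1; lia.
case Hr: (w1 != r).
- by rewrite /lf E1 eqxx Hr in Hl.
- move/negbFE: Hr => /eqP Er. rewrite Er in E1. have := Hr1 E1 => Hall.
  by rewrite !Hall in Hdeg.
Qed.

Hypothesis Hconn : forall x, exists i, touch i x.

Lemma nt_other j0 : ~~ tree j0 -> exists b', isK b' && (b' != j0).
Proof.
clear HbK HK2.
move=> Hj0. case: (boolP [exists b', isK b' && (b' != j0)]) => [/existsP //|H]. exfalso.
have Honly : forall i, isK i -> i = j0.
{ move=> i Hi. apply/eqP/negPn/negP => Hne. move/negP: H; apply. apply/existsP. exists i. by rewrite Hi Hne. }
have Hdeg3 : forall x, (3 <= deg x)%N.
{ move=> x. have := @HA2 x. have [i Hi] := Hconn x. have := deg_ge1 Hi.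
  suff : deg x <> 1%N by lia.
  move=> Hx1. case Hxr: (x != r).
  - have Hl : lf x by rewrite /lf Hx1 eqxx Hxr.
    have := Honly (par x). rewrite /isK tree_par // ch_par // Hl => /(_ isT) E.
    by rewrite -E tree_par in Hj0.
  - move/negbFE: Hxr => /eqP Exr. rewrite Exr in Hx1. have Hall := Hr1 Hx1.
    have Nlf : forall y, touch j0 y -> y = r.
    { move=> y Hy. apply/eqP/negPn/negP => Hyr.
      have Hl : lf y by rewrite /lf Hall eqxx Hyr.
      by rewrite (lf_tree Hl Hy) in Hj0. }
    have Ho := Nlf _ (touch_o j0). have Ht := Nlf _ (touch_t j0).
    have H2 : (1 < deg r)%N by apply: (@deg_loop _ _ o tau j0); rewrite ?Ho ?Ht eqxx.
    by rewrite Hall in H2. }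
have Hsum := handshake o tau.
have Hge : (\sum_(x : V) 3 <= \sum_(x : V) deg x)%N by apply: leq_sum => x _; exact: Hdeg3.
rewrite Hsum sum_nat_const in Hge.
have HN : N = #|V|.
{ have := cardC (fun i : 'I_N => tree i). rewrite card_ord => <-.
  have -> : #|[predC (fun i : 'I_N => tree i)]| = 1%N.
  { rewrite -(card1 j0). apply: eq_card => i. rewrite !inE. apply/idP/idP.
    - move=> Hn. apply/eqP. apply: Honly. by rewrite /isK Hn.
    - move/eqP => ->. exact: Hj0. }
  have -> : #|(fun i : 'I_N => tree i)| = #|[set par u | u in predC1 r]|.
  { apply: eq_card => i. apply/idP/imsetP.
    - move=> Ht. exists (ch i); [by rewrite !inE ch_nr | by rewrite par_ch].
    - case=> u. rewrite !inE => Hu ->. exact: tree_par. }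
  rewrite card_in_imset; last by move=> u1 u2; rewrite !inE; apply: par_inj.
  rewrite cardC1. have : (0 < #|V|)%N by apply/card_gt0P; exists r. lia. }
have : (0 < #|V|)%N by apply/card_gt0P; exists r.
have E : #|(xpredT : pred V)| = #|V| by apply: eq_card.
rewrite E in Hge. lia.
Qed.

Lemma val_nz x : val x <> 0.
Proof.
rewrite /val. case Hl: (lf x); last lra. have Hx : x != r by case/andP: Hl.
rewrite /len tree_par // ch_par // Hl. exact: lf_Fv_nz.
Qed.

Lemma fr0_nz i : fr i 0 <> 0. Proof. rewrite fr0. exact: val_nz. Qed.
Lemma frl_nz i : fr i (len i) <> 0. Proof. rewrite frl. exact: val_nz. Qed.

Lemma not_lf x : deg x <> 1%N -> lf x = false.
Proof. move=> H. rewrite /lf. case E: (deg x == 1%N) => //. by move/eqP: E. Qed.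

Lemma dfr0_nz i : deg (o i) <> 1%N -> sig i <> 0 -> dfr i 0 <> 0.
Proof.
move=> Hd Hs. rewrite /dfr. case Hf: (flip i); last by rewrite Fd0.
move: Hf => /andP[Ht /eqP Ho]. rewrite /len Ht -Ho (not_lf Hd) Rminus_0_r tp_Fd. lra.
Qed.

Lemma dfrl_nz i : deg (tau i) <> 1%N -> sig i <> 0 -> - dfr i (len i) <> 0.
Proof.
move=> Hd Hs. rewrite /dfr. case Hf: (flip i); first by rewrite Rminus_eq_0 Fd0; lra.
case Ht: (tree i).
- case: (tree_cases Ht) => [[_ [Htau _]]|[_ [_ Hf']]]; last by rewrite Hf' in Hf.
  rewrite /len Ht -Htau (not_lf Hd) tp_Fd. lra.
- rewrite /len Ht nt_Fd. lra.
Qed.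

Lemma construct (j : 'I_N * trcomp) : ~ forced_zero o tau j ->
  (match j.2 with trB | trD => sig j.1 <> 0 | _ => True end) ->
  exists (l : 'I_N -> R) (k : R) (f df : 'I_N -> R -> C),
    (forall i, 0 < l i) /\ 0 < k /\
    eigenpair o tau l (k ^ 2) f df /\
    simple_eigenvalue o tau l (k ^ 2) /\
    ~ supported_on_single_loop o tau l f /\
    trace_k l k f df j <> RtoC 0.
Proof.
case: j => i cmp Hnf /= Hs.
exists len, 1, (fun i t => RtoC (fr i t)), (fun i t => RtoC (dfr i t)).
have Heig : eigenpair o tau len (1 ^ 2) (fun i t => RtoC (fr i t)) (fun i t => RtoC (dfr i t)).
{ split; first exact: sol_f. exists i, 0. split; first exact: zero_range. apply: RtoC_neq. exact: fr0_nz. }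
split; first exact: len_pos. split; first lra. split; first exact: Heig. split.
{ exists (fun i t => RtoC (fr i t)), (fun i t => RtoC (dfr i t)). split; first exact: Heig.
  move=> g dg Hsol. exists (cc g). move=> i' t Ht. exact: (@uniq_main g dg Hsol). }
split.
{ move=> [i0 [Hloop Hz]]. case: (boolP [exists j', j' != i0]) => [/existsP [j' Hj']|Hne].
  - have := Hz j' (elimN eqP Hj') 0 (zero_range j'). apply: RtoC_neq. exact: fr0_nz.
  - have Hall : forall j', j' = i0.
    { move=> j'. apply/eqP/negPn/negP => H. move/negP: Hne; apply. apply/existsP. by exists j'. }
    have Honly : forall i', touch i' (o i0) -> (true && (i' == i0)) || (false && (i' == i0)).
    { move=> i' _. by rewrite (Hall i') eqxx. }
    have := deg_only2 Honly. rewrite /T2.ends Hloop eqxx /= => H1.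
    have H2 : (1 < deg (tau i0))%N by apply: (@deg_loop _ _ o tau i0); rewrite ?Hloop eqxx.
    apply: (@HA2 (tau i0)). move: H1 H2. clear. lia. }
case: cmp Hnf Hs => /= Hnf Hs.
- apply: RtoC_neq. exact: fr0_nz.
- rewrite Cdiv1. apply: RtoC_neq. exact: dfr0_nz Hnf Hs.
- apply: RtoC_neq. exact: frl_nz.
- rewrite Cdiv1 -RtoC_opp. apply: RtoC_neq. exact: dfrl_nz Hnf Hs.
Qed.

Lemma crossing v i : v != r -> ~~ tree i -> anc v (o i) != anc v (tau i) ->
  forall x y, connect (aE o tau (fun k => k != par v)) x y.
Proof.
move=> Hv Hn Hneq.
set e := aE o tau (fun k => k != par v).
have Hsym : connect_sym e by apply: sym_connect_sym; exact: aE_sym.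
have Hstep : forall x, x != r -> x != v -> e x (p x).
{ move=> x Hx Hxv. apply/existsP. exists (par x).
  have -> : (par x != par v) = true.
  { apply/negP => /eqP E. move: Hxv. by rewrite (par_inj Hx Hv E) eqxx. }
  case/orP: (Hpar Hx) => /andP[-> ->]; by rewrite ?orbT. }
have reach : forall x, (anc v x -> connect e x v) /\ (~~ anc v x -> connect e x r).
{ apply: dep_ind => x IH. case Hxr: (x != r); last first.
  { move/negbFE: Hxr => /eqP ->. split; last by move=> _; exact: connect0.
    move/anc_r_only => E. by rewrite E eqxx in Hv. }
  case Hxv: (x == v).
  { move/eqP: Hxv => ->. split; first by move=> _; exact: connect0. by rewrite anc_refl. }
  have [IH1 IH2] := IH (p x) (child_dep Hxr).
  have Hs := Hstep x Hxr (negbT Hxv).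
  split.
  - move=> Ha. apply: connect_trans (connect1 Hs) (IH1 (anc_p' (negbT Hxv) Ha)).
  - move=> Ha. apply: connect_trans (connect1 Hs) (IH2 _). apply/negP => Hp. move/negP: Ha; apply.
    exact: anc_p Hxr Hp. }
have Hi : e (o i) (tau i).
{ apply/existsP. exists i. rewrite !eqxx /= andbT. apply/eqP => E. by rewrite E tree_par in Hn. }
have Hvr : connect e v r.
{ case Ho: (anc v (o i)).
  - have Ht : ~~ anc v (tau i) by rewrite Ho in Hneq.
    have A : connect e v (o i) by rewrite Hsym; exact: (reach (o i)).1 Ho.
    exact: connect_trans (connect_trans A (connect1 Hi)) ((reach (tau i)).2 Ht).
  - have Ht : anc v (tau i) by move: Hneq; rewrite Ho; case: (anc v (tau i)).
    have A : connect e v (tau i) by rewrite Hsym; exact: (reach (tau i)).1 Ht.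
    have Hi' : e (tau i) (o i) by rewrite /e aE_sym.
    exact: connect_trans (connect_trans A (connect1 Hi')) ((reach (o i)).2 (negbT Ho)). }
have Hr : forall x, connect e x r.
{ move=> x. case Ha: (anc v x).
  - exact: connect_trans ((reach x).1 Ha) Hvr.
  - exact: (reach x).2 (negbT Ha). }
move=> x y. apply: connect_trans (Hr x) _. rewrite Hsym. exact: Hr.
Qed.

End Tree.


End T34.
Import T34.

Module T5.
Set Implicit Arguments.
Unset Strict Implicit.

Section BFS.
Variables (V : finType) (N : nat) (o tau : 'I_N -> V) (E : pred 'I_N) (r : V) (i0 : 'I_N).
Local Notation e := (aE o tau E).
Hypothesis Hc : forall v, connect e r v.

Fixpoint walkb (n : nat) (v : V) : bool :=
  match n with 0 => v == r | n'.+1 => [exists w, walkb n' w && e w v] end.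

Lemma walk_path s x n : walkb n x -> path e x s -> walkb (n + size s) (last x s).
Proof.
elim: s x n => [|y s IH] x n Hw /=; first by rewrite addn0.
case/andP => Hxy Hp. rewrite addnS -addSn. apply: IH => //=.
apply/existsP. exists x. by rewrite Hw Hxy.
Qed.

Lemma walk_ex v : exists n, walkb n v.
Proof.
case/connectP: (Hc v) => s Hp ->. exists (0 + size s)%N. by apply: walk_path => //=.
Qed.

Definition dep v := ex_minn (walk_ex v).

Lemma dep_walk v : walkb (dep v) v.
Proof. rewrite /dep. by case: ex_minnP. Qed.

Lemma dep_min v n : walkb n v -> (dep v <= n)%N.
Proof. rewrite /dep. case: ex_minnP => m _ H. exact: H. Qed.

Lemma dep_r : dep r = 0%N.
Proof. apply/eqP. rewrite -leqn0. apply: dep_min. exact: eqxx. Qed.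

Definition p v := odflt r [pick w | walkb (dep v).-1 w && e w v].
Definition par v := odflt i0 [pick i | E i && (((o i == p v) && (tau i == v)) || ((o i == v) && (tau i == p v)))].

Lemma p_spec v : v != r -> walkb (dep v).-1 (p v) && e (p v) v.
Proof.
move=> Hv. have Hw := dep_walk v. case Hd: (dep v) Hw => [|d] /=.
- move/eqP => E0. by rewrite E0 eqxx in Hv.
- move=> Hex. rewrite /p Hd /=. case: pickP => [w -> //|H].
  case/existsP: Hex => w Hw. by rewrite H in Hw.
Qed.

Lemma dep_p v : v != r -> (dep (p v)).+1 = dep v.
Proof.
move=> Hv. have /andP[Hw He] := p_spec Hv.
have H1 := dep_min Hw.
have H2 : (dep v <= (dep (p v)).+1)%N.
{ apply: dep_min => /=. apply/existsP. exists (p v). by rewrite dep_walk He. }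
have H0 : dep v <> 0%N.
{ move=> E0. have := dep_walk v. rewrite E0 /= => /eqP E1. by rewrite E1 eqxx in Hv. }
lia.
Qed.

Lemma par_spec v : v != r -> E (par v) &&
  (((o (par v) == p v) && (tau (par v) == v)) || ((o (par v) == v) && (tau (par v) == p v))).
Proof.
move=> Hv. have /andP[_ He] := p_spec Hv. rewrite /par. case: pickP => [i -> //|H].
case/existsP: He => i Hi. rewrite H in Hi. by [].
Qed.
End BFS.

Section FromTree.
Variables (V : finType) (N : nat) (o tau : 'I_N -> V).
Local Notation deg := (degree o tau).
Variables (r : V) (p : V -> V) (par : V -> 'I_N) (dep : V -> nat).
Hypothesis Hdr : dep r = 0%N.
Hypothesis Hdp : forall v, v != r -> (dep (p v)).+1 = dep v.
Hypothesis Hpar : forall v, v != r ->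
  ((o (par v) == p v) && (tau (par v) == v)) || ((o (par v) == v) && (tau (par v) == p v)).
Hypothesis HA2 : forall x, deg x <> 2%N.
Hypothesis Hr1 : deg r = 1%N -> forall x, deg x = 1%N.
Hypothesis Hconn : forall x, exists i, touch o tau i x.

Lemma from_tree (j : 'I_N * trcomp) : ~ forced_zero o tau j ->
  (tree r par j.1 -> forall i, ~~ tree r par i ->
      anc p dep (ch r par j.1) (o i) = anc p dep (ch r par j.1) (tau i)) ->
  exists (l : 'I_N -> R) (k : R) (f df : 'I_N -> R -> C),
    (forall i, 0 < l i) /\ 0 < k /\
    eigenpair o tau l (k ^ 2) f df /\
    simple_eigenvalue o tau l (k ^ 2) /\
    ~ supported_on_single_loop o tau l f /\
    trace_k l k f df j <> RtoC 0.
Proof.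
case: j => j1 cmp Hnf Hcr /=.
have HK2 : forall b, ~~ tree r par b -> exists a, isK o tau r par a && (a != b).
{ move=> b Hb. have [a Ha] := nt_other Hdr Hdp Hpar HA2 Hr1 Hconn Hb. exists a. exact: Ha. }
pose bg := odflt j1 [pick i | isK o tau r par i].
have HbKg : isK o tau r par bg \/ (forall i, ~~ isK o tau r par i).
{ rewrite /bg. case: pickP => [i Hi|H]; [left; exact: Hi | right => i; by rewrite H]. }
case Htj: (tree r par j1).
-
  have Hv := ch_nr Hdr Hdp Hpar Htj. have Hpv := par_ch Hdr Hdp Hpar Htj.
  set v := ch r par j1 in Hv Hpv Hcr.
  have Hcross := Hcr Htj. clear Hcr.
  have Hdeg' : (cmp = trB \/ cmp = trD) -> (deg v != 1%N) || (deg (p v) != 1%N).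
  { move=> Hc. have Hend : (deg (o j1) <> 1%N /\ deg (o j1) <> 1%N) \/ (deg (tau j1) <> 1%N /\ deg (tau j1) <> 1%N).
    { case: Hc => Hc; rewrite Hc /= in Hnf; [left|right]; by split. }
    have := Hpar Hv. rewrite Hpv.
    case/orP => /andP[/eqP Ho /eqP Ht]; case: Hend => [[H _]|[H _]];
      rewrite ?Ho ?Ht in H; apply/orP; [right|left|left|right]; by apply/eqP. }
  have Hmain : (cmp = trB \/ cmp = trD) -> exists b, (isK o tau r par b) /\ sig o tau r p par dep b j1 <> 0.
  { move=> Hc. have [b /andP[HbK /forallP Hb]] := comp_contrib Hdr Hdp Hpar HA2 Hr1 Hv (Hdeg' Hc) Hcross.
    exists b. split=> //. rewrite /sig Htj -/v.
    have [w0 /andP[Hw0 Hc0]] := sub_contrib Hdr Hdp Hpar (v := v) Hv.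
    have := SS_pos Hdr Hdp Hpar (b := b) Hw0 Hc0 (fun w Hw => implyP (Hb w) Hw). lra. }
  case: cmp Hnf Hmain Hdeg' => Hnf Hmain _.
  + by apply: (construct Hdr Hdp Hpar HbKg (HK2 bg) HA2 (j := (j1, trA)) Hnf).
  + have [b [HbK Hs]] := Hmain (or_introl erefl).
    by apply: (construct Hdr Hdp Hpar (or_introl HbK) (HK2 b) HA2 (j := (j1, trB)) Hnf).
  + by apply: (construct Hdr Hdp Hpar HbKg (HK2 bg) HA2 (j := (j1, trC)) Hnf).
  + have [b [HbK Hs]] := Hmain (or_intror erefl).
    by apply: (construct Hdr Hdp Hpar (or_introl HbK) (HK2 b) HA2 (j := (j1, trD)) Hnf).
-
  have [b /andP[Hb Hbj]] := HK2 j1 (negbT Htj).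
  have Hs : sig o tau r p par dep b j1 <> 0.
  { rewrite /sig Htj /c eq_sym (negbTE Hbj). lra. }
  apply: (construct Hdr Hdp Hpar (or_introl Hb) (HK2 b) HA2 (j := (j1, cmp)) Hnf).
  by case: (cmp) Hnf.
Qed.
End FromTree.


End T5.
Import T5.

Unset Implicit Arguments.
Set Strict Implicit.

Theorem mainTheorem16 (V : finType) (N : nat) (o tau : 'I_N -> V)
  (j : 'I_N * trcomp) :
  assumptionA o tau ->
  ~ forced_zero o tau j ->
  exists (l : 'I_N -> R) (k : R) (f df : 'I_N -> R -> C),
    (forall i, 0 < l i) /\ 0 < k /\
    eigenpair o tau l (k ^ 2) f df /\
    simple_eigenvalue o tau l (k ^ 2) /\
    ~ supported_on_single_loop o tau l f /\
    trace_k l k f df j <> RtoC 0.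
Proof.
case=> Hconn Hdeg _ Hnf.
pose j1 := j.1.
pose r := odflt (o j1) [pick x | degree o tau x != 1%N].
have Hr1 : degree o tau r = 1%N -> forall x, degree o tau x = 1%N.
{ rewrite /r. case: pickP => [x Hx|H] /=.
  - move=> E. by rewrite E in Hx.
  - move=> _ x. move: (H x) => /negbFE /eqP. by []. }
have Htouch : forall x, exists i, touch o tau i x.
{ move=> x. case/connectP: (Hconn x (o j1)) => s Hp Hl. case: s Hp Hl => [|y s] /= Hp Hl.
  - exists j1. by rewrite /touch -Hl eqxx.
  - case/andP: Hp => Hxy _. case/existsP: Hxy => i /orP[/andP[/eqP Ho _]|/andP[_ /eqP Ht]];
      exists i; by rewrite /touch ?Ho ?Ht eqxx ?orbT. }
case Hcj: [forall x, forall y, connect (aE o tau (fun k => k != j1)) x y].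
- have Hc : forall v, connect (aE o tau (fun k => k != j1)) r v.
  { move=> v. by move/forallP: Hcj => /(_ r) /forallP /(_ v). }
  have Hpar' : forall v, v != r -> ((o (par j1 Hc v) == p Hc v) && (tau (par j1 Hc v) == v)) ||
      ((o (par j1 Hc v) == v) && (tau (par j1 Hc v) == p Hc v)).
  { move=> v Hv. by case/andP: (par_spec j1 Hc Hv) => _ ->. }
  apply: (@from_tree V N o tau r (p Hc) (par j1 Hc) (dep Hc) (dep_r Hc) (dep_p Hc) Hpar' Hdeg Hr1 Htouch j Hnf).
  move=> Ht. exfalso. have Hv := ch_nr (dep_r Hc) (dep_p Hc) Hpar' Ht.
  have := par_spec j1 Hc Hv. rewrite (par_ch (dep_r Hc) (dep_p Hc) Hpar' Ht) eqxx. by [].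
- have Hc : forall v, connect (aE o tau predT) r v.
  { move=> v. rewrite (@eq_connect _ _ (adjacent o tau)) //. }
  have Hpar' : forall v, v != r -> ((o (par j1 Hc v) == p Hc v) && (tau (par j1 Hc v) == v)) ||
      ((o (par j1 Hc v) == v) && (tau (par j1 Hc v) == p Hc v)).
  { move=> v Hv. by case/andP: (par_spec j1 Hc Hv) => _ ->. }
  apply: (@from_tree V N o tau r (p Hc) (par j1 Hc) (dep Hc) (dep_r Hc) (dep_p Hc) Hpar' Hdeg Hr1 Htouch j Hnf).
  move=> Ht i Hi. apply/eqP/negPn/negP => Hneq.
  have Hv := ch_nr (dep_r Hc) (dep_p Hc) Hpar' Ht.
  have H := crossing (dep_r Hc) (dep_p Hc) Hpar' Hv Hi Hneq.
  rewrite (par_ch (dep_r Hc) (dep_p Hc) Hpar' Ht) in H.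
  have : [forall x, forall y, connect (aE o tau (fun k => k != j1)) x y].
  { apply/forallP => x. apply/forallP => y. exact: H. }
  by rewrite Hcj.
Qed.
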